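(* For every dual quaternion $\hat a\in\hat{\mathbb Q}$ there exist a unit dual quaternion $\hat q\in\hat{\mathbb U}$ and a dual complex number $\hat\lambda\in\mathbb{DC}$ such that $\hat q^*\hat a\hat q=\hat\lambda$.
   Context: $\mathbb{Q}$ denotes the real quaternions with units $i,j,k$; complex numbers are identified with quaternions $a+bi$. $\varepsilon$ satisfies $\varepsilon\ne0$, $\varepsilon^2=0$ and commutes with quaternions. A dual quaternion is $\hat p=\tilde p_{st}+\tilde p_{\mathcal I}\varepsilon$ with $\tilde p_{st},\tilde p_{\mathcal I}\in\mathbb Q$; its conjugate is $\hat p^*=\tilde p_{st}^*+\tilde p_{\mathcal I}^*\varepsilon$. $\mathbb{DC}$ is the set of dual complex numbers $a_{st}+a_{\mathcal I}\varepsilon$ with $a_{st},a_{\mathcal I}\in\mathbb C$. The absolute value of $\hat p$ is $|\tilde p_{st}|+\frac{\mathrm{sc}(\tilde p_{st}^*\tilde p_{\mathcal I})}{|\tilde p_{st}|}\varepsilon$ if $\tilde p_{st}\neq0$ and $|\tilde p_{\mathcal I}|\varepsilon$ otherwise, with $\mathrm{sc}(\tilde p)=\frac12(\tilde p+\tilde p^* )$; $\hat p$ is a unit dual quaternion if $|\hat p|=1$ (equivalently $\hat p^*\hat p=\hat p\hat p^*=1$). $\hat{\mathbb U}$ is the set of unit dual quaternions. *)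

(* Defs.v *)
From Stdlib Require Import Reals.
Open Scope R_scope.

Record quat := Quat { q0 : R; q1 : R; q2 : R; q3 : R }.

Definition qzero : quat := Quat 0 0 0 0.
Definition qone : quat := Quat 1 0 0 0.

Definition qadd (a b : quat) : quat :=
  Quat (q0 a + q0 b) (q1 a + q1 b) (q2 a + q2 b) (q3 a + q3 b).

(** Hamilton product (i^2 = j^2 = k^2 = ijk = -1). *)
Definition qmul (a b : quat) : quat :=
  Quat (q0 a * q0 b - q1 a * q1 b - q2 a * q2 b - q3 a * q3 b)
       (q0 a * q1 b + q1 a * q0 b + q2 a * q3 b - q3 a * q2 b)
       (q0 a * q2 b - q1 a * q3 b + q2 a * q0 b + q3 a * q1 b)
       (q0 a * q3 b + q1 a * q2 b - q2 a * q1 b + q3 a * q0 b).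

Definition qconj (a : quat) : quat := Quat (q0 a) (- q1 a) (- q2 a) (- q3 a).

Definition qnorm (a : quat) : R :=
  sqrt (q0 a * q0 a + q1 a * q1 a + q2 a * q2 a + q3 a * q3 a).

(** sc(p) = (p + conj p)/2, a real quaternion, identified with its real part. *)
Definition qsc (a : quat) : R := q0 a.

Definition is_complex (a : quat) : Prop := q2 a = 0 /\ q3 a = 0.

Definition quat_eq_dec (a b : quat) : {a = b} + {a <> b}.
Proof. decide equality; apply Req_EM_T. Defined.

(** Dual quaternions p_st + p_I eps, eps^2 = 0. *)
Record dquat := DQ { dst : quat; dinf : quat }.

Definition dqmul (p r : dquat) : dquat :=
  DQ (qmul (dst p) (dst r)) (qadd (qmul (dst p) (dinf r)) (qmul (dinf p) (dst r))).

Definition dqconj (p : dquat) : dquat := DQ (qconj (dst p)) (qconj (dinf p)).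

(** Dual real numbers a_st + a_I eps, as pairs (a_st, a_I). *)
Definition dreal := (R * R)%type.

Definition dqabs (p : dquat) : dreal :=
  if quat_eq_dec (dst p) qzero
  then (0, qnorm (dinf p))
  else (qnorm (dst p), qsc (qmul (qconj (dst p)) (dinf p)) / qnorm (dst p)).

Definition is_unit_dq (p : dquat) : Prop := dqabs p = (1, 0).

Definition is_dual_complex (p : dquat) : Prop :=
  is_complex (dst p) /\ is_complex (dinf p).

(* Main.v *)
Require Import Defs.
From Stdlib Require Import Reals.
From Stdlib Require Import Lra Psatz Classical.
Open Scope R_scope.

Definition conjby (u x : quat) : quat := qmul (qmul (qconj u) x) u.

Lemma qone_norm : qnorm qone = 1.
Proof. unfold qnorm; simpl. replace (1*1+0*0+0*0+0*0) with 1 by ring. apply sqrt_1. Qed.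

Lemma qone_unit : qmul (qconj qone) qone = qone.
Proof. unfold qmul, qconj, qone; simpl; f_equal; ring. Qed.

Lemma conjby_real (u x : quat) : q1 x = 0 -> q2 x = 0 -> q3 x = 0 ->
  is_complex (conjby u x).
Proof.
  destruct u, x; simpl; intros -> -> ->. unfold is_complex, conjby, qmul, qconj; simpl.
  split; ring.
Qed.

Lemma rot (x : quat) : exists u, qnorm u = 1 /\ qmul (qconj u) u = qone /\
  is_complex (conjby u x) /\
  (~ (q1 x = 0 /\ q2 x = 0 /\ q3 x = 0) -> q1 (conjby u x) <> 0).
Proof.
  destruct x as [x0 v1 v2 v3]; simpl.
  destruct (Req_EM_T (v1*v1+v2*v2+v3*v3) 0) as [HS|HS].
  - exists qone. split; [apply qone_norm|]. split; [apply qone_unit|].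
    assert (v1 = 0) by nra. assert (v2 = 0) by nra. assert (v3 = 0) by nra.
    split.
    + apply conjby_real; simpl; auto.
    + intros H'; exfalso; auto.
  - assert (HSp : 0 < v1*v1+v2*v2+v3*v3) by nra.
    set (S := v1*v1+v2*v2+v3*v3) in *.
    set (r := sqrt S).
    assert (Hr : r * r = S) by (apply sqrt_sqrt; lra).
    assert (Hr0 : 0 < r) by (apply sqrt_lt_R0; lra).
    unfold S in Hr.
    destruct (Req_EM_T (r+v1) 0) as [Hv|Hv].
    + assert (e1 : v1 = -r) by lra.
      assert (e2 : v2 = 0) by nra. assert (e3 : v3 = 0) by nra.
      exists qone. split; [apply qone_norm|]. split; [apply qone_unit|].
      split.
      * unfold is_complex, conjby, qmul, qconj, qone; simpl. rewrite e2, e3. split; ring.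
      * intros _. unfold conjby, qmul, qconj, qone; simpl.
        match goal with |- ?e <> 0 => replace e with v1 by ring end. lra.
    + assert (Hv1 : 0 < r + v1) by nra.
      set (N := 2*r*(r+v1)).
      assert (HN : 0 < N) by (unfold N; nra).
      assert (HNe : (r+v1)*(r+v1) + v3*v3 + v2*v2 = N) by (unfold N; nra).
      set (m := / sqrt N).
      assert (Hm : m*m*N = 1).
      { unfold m. rewrite <- Rinv_mult. rewrite sqrt_sqrt by lra. field. lra. }
      exists (Quat (m*(r+v1)) 0 (m*(-v3)) (m*v2)).
      split.
      { unfold qnorm; simpl.
        replace (m * (r + v1) * (m * (r + v1)) + 0 * 0 + m * - v3 * (m * - v3) + m * v2 * (m * v2))
          with (m*m*((r+v1)*(r+v1) + v3*v3 + v2*v2)) by ring.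
        rewrite HNe, Hm. apply sqrt_1. }
      split.
      { unfold qmul, qconj, qone; simpl. f_equal; try ring.
        rewrite <- Hm, <- HNe. ring. }
      assert (E: r^2 = v1^2+v2^2+v3^2) by (simpl; lra).
      assert (E3: r^3 = r*(v1^2+v2^2+v3^2)) by (rewrite <- E; ring).
      split.
      { unfold is_complex, conjby, qmul, qconj; simpl. split.
        - ring_simplify. rewrite E. ring.
        - ring_simplify. rewrite E. ring. }
      intros _. unfold conjby, qmul, qconj; simpl.
      assert (Hc : forall e, e = m*m*N*r -> e <> 0).
      { intros e ->. rewrite Hm. lra. }
      apply Hc. unfold N. ring_simplify. rewrite ?E3, ?E. ring.
Qed.

Lemma expand (u w x y : quat) :
  dqmul (dqmul (dqconj (DQ u (qmul u w))) (DQ x y)) (DQ u (qmul u w)) =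
  DQ (conjby u x)
     (qadd (qadd (qmul (conjby u x) w) (conjby u y)) (qmul (qconj w) (conjby u x))).
Proof.
  destruct u, w, x, y. unfold dqmul, dqconj, conjby, qmul, qadd, qconj; simpl.
  f_equal; f_equal; ring.
Qed.

Lemma unit_q (u w : quat) : qnorm u = 1 -> qmul (qconj u) u = qone -> q0 w = 0 ->
  is_unit_dq (DQ u (qmul u w)).
Proof.
  intros Hn Hu Hw. unfold is_unit_dq, dqabs; simpl.
  destruct (quat_eq_dec u qzero) as [E|E].
  - exfalso. rewrite E in Hn. unfold qnorm, qzero in Hn; simpl in Hn.
    replace (0*0+0*0+0*0+0*0) with 0 in Hn by ring. rewrite sqrt_0 in Hn. lra.
  - rewrite Hn. f_equal.
    assert (H0 : q0 (qmul (qconj u) u) = 1) by (rewrite Hu; reflexivity).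
    assert (K : qsc (qmul (qconj u) (qmul u w)) = q0 (qmul (qconj u) u) * q0 w).
    { unfold qsc. destruct u, w; simpl. ring. }
    change (qsc (qmul (qconj u) (qmul u w)) / 1 = 0). rewrite K, H0, Hw. field.
Qed.

Lemma fin (c b w : quat) : q2 c = 0 -> q3 c = 0 -> q0 w = 0 -> q1 w = 0 ->
  q2 (qadd (qadd (qmul c w) b) (qmul (qconj w) c)) = q2 b - 2 * q1 c * q3 w /\
  q3 (qadd (qadd (qmul c w) b) (qmul (qconj w) c)) = q3 b + 2 * q1 c * q2 w.
Proof.
  destruct c, b, w; simpl; intros -> -> -> ->. split; ring.
Qed.

Theorem lemma3p3 :
  forall a : dquat,
    exists q : dquat, exists lam : dquat,
      is_unit_dq q /\ is_dual_complex lam /\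
      dqmul (dqmul (dqconj q) a) q = lam.
Proof.
  intros [x y].
  destruct (classic (q1 x = 0 /\ q2 x = 0 /\ q3 x = 0)) as [Hx|Hx].
  - destruct (rot y) as [u [Hn [Hu [Hc _]]]].
    exists (DQ u (qmul u qzero)).
    eexists. split; [apply unit_q; auto|]. split; [|rewrite expand; reflexivity].
    destruct Hx as [h1 [h2 h3]].
    pose proof (conjby_real u x h1 h2 h3) as Hcx.
    split; [exact Hcx|].
    destruct Hcx as [c2 c3]. destruct Hc as [b2 b3].
    destruct (fin (conjby u x) (conjby u y) qzero c2 c3 eq_refl eq_refl) as [f2 f3].
    split; simpl dinf; [rewrite f2, b2 | rewrite f3, b3]; simpl; ring.
  - destruct (rot x) as [u [Hn [Hu [Hc Hc1]]]].
    specialize (Hc1 Hx).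
    set (c := conjby u x) in *. set (b := conjby u y).
    set (w := Quat 0 0 (- q3 b / (2 * q1 c)) (q2 b / (2 * q1 c))).
    exists (DQ u (qmul u w)).
    eexists. split; [apply unit_q; auto|]. split; [|rewrite expand; reflexivity].
    split; [exact Hc|].
    destruct Hc as [c2 c3].
    destruct (fin c b w c2 c3 eq_refl eq_refl) as [f2 f3].
    unfold is_complex; cbn [dinf]. fold c b. rewrite f2, f3. unfold w; simpl; split; field; auto.
Qed.
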